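(* In the setting described in the context, let $i\in\mathcal V$ and let $z_{-i}=(z_j)_{j\ne i}$ satisfy $z_j<1$ for all $j\ne i$. Then the best response set of agent $i$ is the singleton $$\mathcal B_i(z_{-i})=\left\{\left[1-\frac{A_i(z_{-i})\pi_i\sigma_i^2}{B_i(z_{-i})}\right]_+\right\},$$ where $[a]_+=\max\{a,0\}$, $A_i(z_{-i})=\sum_{j\ne i}\frac{\pi_j}{1-z_j}$ and $B_i(z_{-i})=\sum_{j\ne i}\frac{\pi_j^2\sigma_j^2}{(1-z_j)^2}$. In particular $\mathcal B_i(z_{-i})\subseteq[0,1)$.
   Context: Let $n\ge2$ and $\mathcal V=\{1,\dots,n\}$. Let $P\in\mathbb{R}^{n\times n}$ be a row-stochastic, irreducible, aperiodic matrix (the graph on $\mathcal V$ with edge $(i,j)$ iff $P_{ij}>0$ is strongly connected with gcd of cycle lengths $1$) and $\pi$ the unique probability vector with $P'\pi=\pi$. For $z\in[0,1]^n$, $W(z)=(I-[z])P+[z]$ ($[z]$ the diagonal matrix with diagonal $z$) and $H(z)=\lim_{t\to\infty}W(z)^t$ (the limit exists and is row-stochastic). Let $\sigma_1^2,\dots,\sigma_n^2>0$. Agent $i$'s cost is $\upsilon_i(z)=\sum_jH_{ij}(z)^2\sigma_j^2$, written $\upsilon_i(z_i,z_{-i})$, and her best response set is $\mathcal B_i(z_{-i})=\arg\min_{z_i\in[0,1]}\upsilon_i(z_i,z_{-i})$. *)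

(* Defs.v *)
From HB Require Import structures.
From mathcomp Require Import all_boot all_order all_algebra.
From mathcomp Require Import all_classical all_reals all_analysis.
Set Implicit Arguments. Unset Strict Implicit. Unset Printing Implicit Defensive.
Import Order.TTheory GRing.Theory Num.Theory.
Local Open Scope ring_scope.
Local Open Scope classical_set_scope.

Section Defs.
Variables (R : realType) (n : nat).

Definition row_stochastic (P : 'M[R]_n) : Prop :=
  (forall i j, 0 <= P i j) /\ (forall i, \sum_j P i j = 1).

Definition Pgraph (P : 'M[R]_n) : rel 'I_n := fun i j => 0 < P i j.

Definition irreducible_mx (P : 'M[R]_n) : Prop :=
  forall i j, connect (Pgraph P) i j.

Definition closed_walk_length (P : 'M[R]_n) (t : nat) : Prop :=
  (0 < t)%N /\ exists f : nat -> 'I_n,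
    f 0%N = f t /\ forall k, (k < t)%N -> Pgraph P (f k) (f k.+1).

Definition aperiodic_mx (P : 'M[R]_n) : Prop :=
  forall d : nat, (forall t, closed_walk_length P t -> (d %| t)%N) -> d = 1%N.

Definition stationary_dist (P : 'M[R]_n) (pi : 'I_n -> R) : Prop :=
  (forall i, 0 <= pi i) /\ \sum_i pi i = 1 /\
  (forall j, \sum_i pi i * P i j = pi j).

Definition Wmx (P : 'M[R]_n) (z : 'I_n -> R) : 'M[R]_n :=
  \matrix_(a, b) ((1 - z a) * P a b + (if a == b then z a else 0)).

Definition Hmx (P : 'M[R]_n) (z : 'I_n -> R) (a b : 'I_n) : R :=
  limn (fun t : nat => (((Wmx P z) ^+ t) a b : R^o)).

(* cost of agent i: sum_j H_ij(z)^2 sigma_j^2, with s j = sigma_j^2 *)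
Definition cost (P : 'M[R]_n) (s : 'I_n -> R) (i : 'I_n) (z : 'I_n -> R) : R :=
  \sum_j (Hmx P z i j) ^+ 2 * s j.

Definition upd (z : 'I_n -> R) (i : 'I_n) (x : R) : 'I_n -> R :=
  fun j => if j == i then x else z j.

Definition best_response (P : 'M[R]_n) (s : 'I_n -> R) (i : 'I_n)
  (z : 'I_n -> R) : set R :=
  [set x | 0 <= x <= 1 /\
     forall y, 0 <= y <= 1 -> cost P s i (upd z i x) <= cost P s i (upd z i y)].

Definition Acoef (pi z : 'I_n -> R) (i : 'I_n) : R :=
  \sum_(j | j != i) pi j / (1 - z j).

Definition Bcoef (pi s z : 'I_n -> R) (i : 'I_n) : R :=
  \sum_(j | j != i) pi j ^+ 2 * s j / (1 - z j) ^+ 2.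

Definition pospart (a : R) : R := Num.max a 0.

End Defs.

(* Main.v *)
Require Import Defs.
From HB Require Import structures.
From mathcomp Require Import all_boot all_order all_algebra.
From mathcomp Require Import all_classical all_reals all_analysis.
From mathcomp Require Import lra ring zify.
Import Order.TTheory GRing.Theory Num.Theory.
Import numFieldNormedType.Exports.
Local Open Scope classical_set_scope.
Local Open Scope ring_scope.
Set Implicit Arguments. Unset Strict Implicit. Unset Printing Implicit Defensive.

Section Mx.
Variables (R : realType) (n : nat).
Implicit Types (A B W : 'M[R]_n).

Definition nneg A := forall a b, 0 <= A a b.
Definition stoch A := nneg A /\ forall a, \sum_b A a b = 1.

Lemma mulE A B a b : (A * B) a b = \sum_k A a k * B k b.
Proof. by rewrite -mulmxE mxE. Qed.

Lemma oneE a b : (1 : 'M[R]_n) a b = (a == b)%:R.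
Proof. by rewrite mxE. Qed.

Lemma powS A t a b : (A ^+ t.+1) a b = \sum_k A a k * (A ^+ t) k b.
Proof. by rewrite exprS mulE. Qed.

Lemma nneg_pow A t : nneg A -> nneg (A ^+ t).
Proof.
move=> hA; elim: t => [|t IH] a b; first by rewrite expr0 oneE ler0n.
by rewrite powS; apply: sumr_ge0 => k _; apply: mulr_ge0.
Qed.

Lemma stoch_pow A t : stoch A -> stoch (A ^+ t).
Proof.
move=> [hA hS]; split; first exact: nneg_pow.
elim: t => [|t IH] a.
  rewrite expr0 (bigD1 a) //= oneE eqxx big1 ?addr0 // => b hb.
  by rewrite oneE eq_sym (negbTE hb).
under eq_bigr do rewrite powS.
rewrite exchange_big /=.
under eq_bigr do rewrite -mulr_sumr IH mulr1.
exact: hS.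
Qed.

Lemma pow_entry_le1 A t a b : stoch A -> (A ^+ t) a b <= 1.
Proof.
move=> /(stoch_pow t) [h1 h2]; rewrite -(h2 a) (bigD1 b) //= lerDl.
by apply: sumr_ge0 => k _.
Qed.

Lemma powD_ge A k j a c b : nneg A ->
  (A ^+ k) a c * (A ^+ j) c b <= (A ^+ (k + j)) a b.
Proof.
move=> hA; rewrite exprD mulE (bigD1 c) //= lerDl.
by apply: sumr_ge0 => l _; apply: mulr_ge0; apply: nneg_pow.
Qed.

Lemma pow_diag_ge A j c : nneg A -> A c c ^+ j <= (A ^+ j) c c.
Proof.
move=> hA; elim: j => [|j IH]; first by rewrite !expr0 oneE eqxx.
have := powD_ge 1 j c c c hA; rewrite add1n expr1 => h.
rewrite exprS; apply: le_trans h; apply: ler_wpM2l => //.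
Qed.

Lemma pow_dom A B (e : R) t a b : nneg A -> 0 <= e ->
  (forall a b, e * A a b <= B a b) -> e ^+ t * (A ^+ t) a b <= (B ^+ t) a b.
Proof.
move=> hA he hB; elim: t a b => [|t IH] a b.
  by rewrite expr0 mul1r.
rewrite !powS exprS mulr_sumr; apply: ler_sum => k _.
rewrite mulrACA; apply: ler_pM => //.
- by apply: mulr_ge0.
- by apply: mulr_ge0; [apply: exprn_ge0 | apply: nneg_pow].
Qed.
End Mx.

Section Doeblin.
Variables (R : realType) (n : nat) (W : 'M[R]_n) (m : nat) (c b : 'I_n).
Hypothesis hW : stoch W.
Hypothesis hpos : forall a, 0 < (W ^+ m) a c.

Let v t a := (W ^+ t) a b.
Let Mx t := \big[Num.max/0]_a v t a.
Let Mn t := \big[Num.min/1]_a v t a.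

Lemma v_ge0 t a : 0 <= v t a. Proof. exact: (nneg_pow t hW.1). Qed.
Lemma v_le1 t a : v t a <= 1. Proof. exact: pow_entry_le1. Qed.
Lemma Mx_ge t a : v t a <= Mx t. Proof. exact: le_bigmax. Qed.
Lemma Mn_le t a : Mn t <= v t a. Proof. exact: bigmin_le. Qed.
Lemma Mx_le1 t : Mx t <= 1.
Proof. by apply: bigmax_le => // a _; apply: v_le1. Qed.
Lemma Mn_ge0 t : 0 <= Mn t.
Proof. by apply: le_bigmin => // a _; apply: v_ge0. Qed.
Lemma Mx_ge0 t : 0 <= Mx t.
Proof. exact: bigmax_ge_id. Qed.
Lemma Mn_le1 t : Mn t <= 1.
Proof. exact: bigmin_le_id. Qed.

Lemma vD s t a : v (s + t) a = \sum_k (W ^+ s) a k * v t k.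
Proof. by rewrite /v exprD mulE. Qed.

Lemma row_split (Q : 'M[R]_n) a (u : 'I_n -> R) (M : R) : stoch Q ->
  (forall k, u k <= M) ->
  \sum_k Q a k * u k <= Q a c * u c + (1 - Q a c) * M.
Proof.
move=> [hQ hS] hu; rewrite (bigD1 c) //= lerD2l.
have -> : 1 - Q a c = \sum_(k | k != c) Q a k.
  by rewrite -(hS a) (bigD1 c) //= addrAC subrr add0r.
rewrite mulr_suml; apply: ler_sum => k _; exact: ler_wpM2l.
Qed.

Lemma row_split' (Q : 'M[R]_n) a (u : 'I_n -> R) (M : R) : stoch Q ->
  (forall k, M <= u k) ->
  Q a c * u c + (1 - Q a c) * M <= \sum_k Q a k * u k.
Proof.
move=> [hQ hS] hu; rewrite (bigD1 c) //= lerD2l.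
have -> : 1 - Q a c = \sum_(k | k != c) Q a k.
  by rewrite -(hS a) (bigD1 c) //= addrAC subrr add0r.
rewrite mulr_suml; apply: ler_sum => k _; exact: ler_wpM2l.
Qed.

Lemma Mx_mono s t : Mx (s + t) <= Mx t.
Proof.
apply: bigmax_le; first exact: Mx_ge0.
move=> a _; rewrite vD.
have [hQ hS] := stoch_pow s hW.
apply: le_trans (_ : \sum_k (W ^+ s) a k * Mx t <= _).
  by apply: ler_sum => k _; apply: ler_wpM2l => //; apply: Mx_ge.
by rewrite -mulr_suml hS mul1r.
Qed.

Lemma Mn_mono s t : Mn t <= Mn (s + t).
Proof.
apply: le_bigmin; first exact: Mn_le1.
move=> a _; rewrite vD.
have [hQ hS] := stoch_pow s hW.
apply: le_trans (_ : \sum_k (W ^+ s) a k * Mn t <= _).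
  by rewrite -mulr_suml hS mul1r.
by apply: ler_sum => k _; apply: ler_wpM2l => //; apply: Mn_le.
Qed.

Let d := \big[Num.min/1]_a (W ^+ m) a c.
Lemma d_gt0 : 0 < d.
Proof. by apply: lt_bigmin => // a _; apply: hpos. Qed.
Lemma d_le1 : d <= 1.
Proof. exact: bigmin_le_id. Qed.
Lemma d_le a : d <= (W ^+ m) a c.
Proof. exact: bigmin_le. Qed.

Lemma contract t : Mx (m + t) - Mn (m + t) <= (1 - d) * (Mx t - Mn t).
Proof.
have hQ := stoch_pow m hW.
have hd0 := d_gt0; have hd1 := d_le1.
have hvc0 := v_ge0 t c; have hvc1 := v_le1 t c.
have h1 : Mx (m + t) <= (1 - d) * Mx t + d * v t c.
  apply: bigmax_le.
    by apply: addr_ge0; apply: mulr_ge0 => //; first [lra | exact: Mx_ge0].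
  move=> a _; rewrite vD.
  apply: le_trans (row_split a (u := v t) hQ (@Mx_ge t)) _.
  have := d_le a; have := Mx_ge t c; have := hQ.1 a c. nra.
have h2 : (1 - d) * Mn t + d * v t c <= Mn (m + t).
  apply: le_bigmin.
    have := Mn_le1 t; nra.
  move=> a _; rewrite vD.
  apply: le_trans _ (row_split' a (u := v t) hQ (@Mn_le t)).
  have := d_le a; have := Mn_le t c; have := hQ.1 a c; have := pow_entry_le1 m a c hW. nra.
lra.
Qed.

Lemma osc_geom k : Mx (k * m) - Mn (k * m) <= (1 - d) ^+ k.
Proof.
elim: k => [|k IH].
  by rewrite mul0n expr0; have := Mx_le1 0; have := Mn_ge0 0; lra.
rewrite mulSn exprS; apply: le_trans (contract _) _.
apply: ler_wpM2l => //; have := d_le1; lra.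
Qed.

Lemma osc_mono s t : (s <= t)%N -> Mx t - Mn t <= Mx s - Mn s.
Proof.
move=> /subnK <-; have := Mx_mono (t - s) s; have := Mn_mono (t - s) s; lra.
Qed.

Lemma doeblin : exists L : R, forall a, (fun t : nat => ((W ^+ t) a b : R)) @ \oo --> L.
Proof.
have Mnon : nonincreasing_seq Mx.
  by move=> s t /subnK <-; apply: Mx_mono.
have cM : cvgn Mx.
  apply: nonincreasing_is_cvgn => //; exists 0 => _ [t _ <-]; exact: Mx_ge0.
have hL := nonincreasing_cvgn_ge Mnon cM.
exists (limn Mx) => a; apply/cvgrPdist_le => e e0.
have e20 : 0 < e / 2 by rewrite divr_gt0.
have [k hk] : exists k, (1 - d) ^+ k <= e / 2.
  have hz : `|1 - d| < 1.
    by have h0 := d_gt0; have h1 := d_le1; rewrite ger0_norm; lra.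
  move: (cvg_expr hz) => /cvgrPdist_le /(_ _ e20) [N _ hN].
  exists N; have := hN N (leqnn N); rewrite sub0r normrN.
  by apply: le_trans; rewrite ler_norm.
move/cvgrPdist_le : cM => /(_ _ e20) hM.
near=> t.
have h1 : `|limn Mx - Mx t| <= e / 2 by near: t.
have h2 : (k * m <= t)%N by near: t; apply: nbhs_infty_ge.
have h3 := osc_mono h2.
have h4 := osc_geom k.
have h5 := hL t.
have h6 := Mx_ge t a; have h7 := Mn_le t a.
rewrite /v in h6 h7.
move: h1; rewrite ler_norml => /andP[h1 h1'].
rewrite ler_norml; apply/andP; split; lra.
Unshelve. all: by end_near.
Qed.

End Doeblin.

Lemma cvg_sum_seq (R : realType) (I : Type) (r : seq I) (f : I -> nat -> R) (l : I -> R) :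
  (forall a, f a @ \oo --> l a) ->
  (fun t => \sum_(a <- r) f a t) @ \oo --> \sum_(a <- r) l a.
Proof.
move=> hf; elim: r => [|i r IH].
  rewrite big_nil; under eq_cvg do rewrite big_nil; exact: cvg_cst.
rewrite big_cons; under eq_cvg do rewrite big_cons.
exact: cvgD.
Qed.

Section Lim.
Variables (R : realType) (n : nat) (W : 'M[R]_n) (m : nat) (c : 'I_n).
Hypothesis hW : stoch W.
Hypothesis hpos : forall a, 0 < (W ^+ m) a c.
Variable nu : 'I_n -> R.
Hypothesis hnu : forall b, \sum_a nu a * W a b = nu b.
Hypothesis hS : \sum_a nu a != 0.

Lemma stat_pow t b : \sum_a nu a * (W ^+ t) a b = nu b.
Proof.
elim: t b => [|t IH] b.
  rewrite (bigD1 b) //= oneE eqxx mulr1 big1 ?addr0 // => a hab.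
  by rewrite oneE (negbTE hab) mulr0.
under eq_bigr do rewrite exprSr mulE mulr_sumr.
rewrite exchange_big /= -[RHS]hnu; apply: eq_bigr => k _.
by rewrite -IH mulr_suml; apply: eq_bigr => a _; rewrite mulrA.
Qed.

Lemma lim_stat a b :
  limn (fun t : nat => (((W ^+ t) a b : R) : R^o)) = nu b / \sum_a nu a.
Proof.
have [L hL] := doeblin b hW hpos.
have h1 : (fun t => \sum_a' nu a' * (W ^+ t) a' b) @ \oo --> \sum_a' nu a' * L.
  apply: cvg_sum_seq => a'; exact: cvgMl_tmp.
have e : (fun t => \sum_a' nu a' * (W ^+ t) a' b) = (fun=> nu b).
  by apply: funext => t; exact: stat_pow.
rewrite e in h1.
have h2 : \sum_a' nu a' * L = nu b by apply: (cvg_unique _ h1 (cvg_cst (nu b))).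
rewrite -mulr_suml in h2.
have -> : nu b / \sum_a nu a = L by rewrite -h2 mulrC mulKf.
exact: (cvg_lim _ (hL a)).
Qed.
End Lim.

Section Prim.
Variables (R : realType) (n : nat).
Implicit Types (A B P : 'M[R]_n).

Lemma pow0_pos A a : 0 < (A ^+ 0) a a.
Proof. by rewrite expr0 oneE eqxx ltr01. Qed.

Lemma pos_add A k j a c b : nneg A -> 0 < (A ^+ k) a c -> 0 < (A ^+ j) c b ->
  0 < (A ^+ (k + j)) a b.
Proof.
move=> hA h1 h2; apply: lt_le_trans (powD_ge k j a c b hA).
exact: mulr_gt0.
Qed.

Lemma reach A B a c : nneg B ->
  (forall u v, u != c -> 0 < A u v -> 0 < B u v) ->
  connect (Pgraph A) a c -> exists k, 0 < (B ^+ k) a c.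
Proof.
move=> hB hAB /connectP [p]; elim: p a => [|x p IH] a /=.
  by move=> _ ->; exists 0%N; apply: pow0_pos.
move=> /andP [hax hp] hc.
have [->|hac] := eqVneq a c; first by exists 0%N; apply: pow0_pos.
have [k hk] := IH x hp hc.
exists (1 + k)%N; apply: pos_add hB _ hk.
by rewrite expr1; apply: hAB.
Qed.

Lemma walk_pos A (f : nat -> 'I_n) t : nneg A ->
  (forall k, (k < t)%N -> Pgraph A (f k) (f k.+1)) ->
  forall k, (k <= t)%N -> 0 < (A ^+ k) (f 0%N) (f k).
Proof.
move=> hA hf; elim=> [|k IH] hk; first exact: pow0_pos.
rewrite -addn1; apply: pos_add hA (IH (ltnW hk)) _.
by rewrite expr1 addn1; exact: (hf k hk).
Qed.

Lemma pad B c : nneg B -> (forall a, exists k, 0 < (B ^+ k) a c) ->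
  (exists N0, forall t, (N0 <= t)%N -> 0 < (B ^+ t) c c) ->
  exists m, forall a, 0 < (B ^+ m) a c.
Proof.
move=> hB hk [N0 hN].
pose kf a := ex_minn (hk a).
have hkf a : 0 < (B ^+ kf a) a c by rewrite /kf; case: ex_minnP.
exists ((\max_a kf a) + N0)%N => a.
have ha : (kf a <= \max_a kf a)%N by exact: leq_bigmax.
have -> : ((\max_a kf a) + N0 = kf a + ((\max_a kf a) + N0 - kf a))%N by lia.
apply: pos_add hB (hkf a) _; apply: hN; lia.
Qed.

Section Semi.
Variables (P : 'M[R]_n) (c : 'I_n).
Hypothesis hP : nneg P.
Hypothesis hirr : irreducible_mx P.
Hypothesis hap : aperiodic_mx P.

Let T t := 0 < (P ^+ t) c c.

Lemma TD a b : T a -> T b -> T (a + b).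
Proof. exact: pos_add. Qed.

Lemma TM k a : T a -> T (k * a).
Proof.
move=> ha; elim: k => [|k IH]; first by rewrite mul0n; apply: pow0_pos.
by rewrite mulSn; apply: TD.
Qed.

Lemma reachP a b : exists k, 0 < (P ^+ k) a b.
Proof. by apply: (@reach P P) => //; apply: hirr. Qed.

Lemma Tdiv d : (forall t, T t -> (d %| t)%N) -> d = 1%N.
Proof.
move=> hd; apply: hap => t [t0 [f [hf0 hf]]].
have hv := walk_pos hP hf (leqnn t); rewrite -hf0 in hv.
have [k1 h1] := reachP c (f 0%N); have [k2 h2] := reachP (f 0%N) c.
have e1 : T (k1 + k2) by apply: pos_add hP h1 h2.
have e2 : T (k1 + t + k2) by apply: pos_add hP _ h2; apply: pos_add hP h1 hv.
have := hd _ e2; rewrite addnAC (dvdn_addr _ (hd _ e1)) //.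
Qed.

Fixpoint G N := if N is N'.+1 then (if T N' then gcdn (G N') N' else G N') else 0%N.

Lemma G_dvd N t : (t < N)%N -> T t -> (G N %| t)%N.
Proof.
elim: N => [//|N IH] /=; rewrite ltnS leq_eqVlt => /orP [/eqP ->|ht] Tt.
  by rewrite Tt dvdn_gcdr.
by case: ifP => _; [apply: dvdn_trans (dvdn_gcdl _ _) (IH ht Tt) | apply: IH].
Qed.

Lemma G_mono N M : (N <= M)%N -> (G M %| G N)%N.
Proof.
move/subnK <-; elim: (M - N)%N => [|k IH] //=.
by case: ifP => _ //; apply: dvdn_trans (dvdn_gcdl _ _) IH.
Qed.

Lemma G_bez N : exists p q, [/\ T p, T q & p = q + G N]%N.
Proof.
elim: N => [|N [p [q [Tp Tq e]]]] /=.
  by exists 0%N, 0%N; split => //; apply: pow0_pos.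
case: ifP => TN; last by exists p, q.
have [->|gpos] := posnP (G N).
  by exists N, 0%N; split => //; [apply: pow0_pos | rewrite gcd0n].
case: (egcdnP N gpos) => km kn e' _.
exists (p * km)%N, (q * km + N * kn)%N; split.
- by rewrite mulnC; apply: TM.
- by apply: TD; rewrite mulnC; apply: TM.
- by rewrite e mulnDl (mulnC (G N)) e' addnA (mulnC kn).
Qed.

Lemma G_pos : exists N, (0 < G N)%N.
Proof.
have [h|h] := pselect (forall t, T t -> (0 %| t)%N); first by have := Tdiv h.
move/existsNP: h => [t /not_implyP [Tt nt]].
exists t.+1; have hd := G_dvd (ltnSn t) Tt.
case: posnP hd => [->|//] hd; by exfalso; apply: nt.
Qed.

Lemma G_one : exists N, G N = 1%N.
Proof.
have [N hN] := G_pos.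
suff: forall g N, G N = g -> (0 < g)%N -> exists N', G N' = 1%N by apply; eauto.
move=> {N hN} g; elim/ltn_ind: g => g IH N eN gpos.
have [g1|g1] := eqVneq g 1%N; first by exists N; rewrite eN.
have [h|h] := pselect (forall t, T t -> (g %| t)%N); first by rewrite (Tdiv h) in g1.
move/existsNP: h => [t /not_implyP [Tt nt]].
pose N' := maxn N t.+1.
have d1 : (G N' %| g)%N by rewrite -eN; apply: G_mono; apply: leq_maxl.
have d2 : (G N' %| t)%N by apply: G_dvd Tt; rewrite leq_max ltnSn orbT.
have p' : (0 < G N')%N.
  rewrite lt0n; apply/eqP => h0; move: d1; rewrite h0 dvd0n => /eqP; lia.
have lt : (G N' < g)%N.
  rewrite ltn_neqAle (dvdn_leq gpos d1) andbT; apply/eqP => e.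
  by apply: nt; rewrite -e.
exact: (IH (G N') lt N').
Qed.

Lemma T_eventually : exists N0, forall t, (N0 <= t)%N -> T t.
Proof.
have [N hN] := G_one; have [p [q [Tp Tq e]]] := G_bez N; rewrite hN in e.
have [q0|qpos] := posnP q.
  exists 0%N => t _; have := TM t Tp; by rewrite e q0 add0n muln1.
exists (q * q)%N => t ht.
have hd := divn_eq t q; have hr := ltn_pmod t qpos.
have ha : (q <= t %/ q)%N by rewrite leq_divRL.
move: hd hr ha; set a := (t %/ q)%N; set r := (t %% q)%N => hd hr ha.
have -> : t = ((a - r) * q + r * p)%N by rewrite e; nia.
by apply: TD; apply: TM.
Qed.

Lemma primitive : exists m, forall a, 0 < (P ^+ m) a c.
Proof. exact: pad hP (fun a => reachP a c) T_eventually. Qed.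

End Semi.
End Prim.

Ltac pos := repeat first [assumption | apply: mulr_gt0 | apply: addr_gt0 | apply: exprn_gt0 | apply: divr_gt0 | lra].
Ltac nz := repeat (apply/andP; split); apply: lt0r_neq0; pos.

Section Alg.
Variables (R : realType) (A B s : R).
Hypotheses (hA : 0 < A) (hB : 0 < B) (hs : 0 < s).

Definition g (y : R) := (y ^+ 2 * s + B) / (y + A) ^+ 2.
Definition gmin := B * s / (B + A ^+ 2 * s).

Lemma g_diff y : 0 < y ->
  g y - gmin = (y * A * s - B) ^+ 2 / ((y + A) ^+ 2 * (B + A ^+ 2 * s)).
Proof.
move=> hy; rewrite /g /gmin; field; nz.
Qed.

Lemma den_pos y : 0 < y -> 0 < (y + A) ^+ 2 * (B + A ^+ 2 * s).
Proof.
move=> hy; apply: mulr_gt0; first by apply: exprn_gt0; apply: addr_gt0.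
by apply: addr_gt0 => //; apply: mulr_gt0 => //; apply: exprn_gt0.
Qed.

Lemma g_ge y : 0 < y -> gmin <= g y.
Proof.
move=> hy; rewrite -subr_ge0 g_diff //; apply: divr_ge0.
  exact: sqr_ge0.
exact: ltW (den_pos hy).
Qed.

Lemma g_gt y : 0 < y -> y * A * s != B -> gmin < g y.
Proof.
move=> hy hne; rewrite -subr_gt0 g_diff //; apply: divr_gt0; last exact: den_pos.
by rewrite exprn_even_gt0 //= subr_eq0.
Qed.

Lemma g_at : g (B / (A * s)) = gmin.
Proof.
apply/eqP; rewrite -subr_eq0 g_diff ?divr_gt0 ?mulr_gt0 //.
have -> : B / (A * s) * A * s = B by field; nz.
by rewrite subrr expr0n /= mul0r.
Qed.

Lemma gmin_lt_s : gmin < s.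
Proof.
rewrite /gmin ltr_pdivrMr; last by apply: addr_gt0 => //; apply: mulr_gt0 => //; apply: exprn_gt0.
have h : 0 < A ^+ 2 * s by apply: mulr_gt0 => //; apply: exprn_gt0.
nra.
Qed.

Lemma g_lt_s y : 0 < y -> B <= y * A * s -> g y < s.
Proof.
move=> hy hB'; rewrite /g ltr_pdivrMr; last by apply: exprn_gt0; apply: addr_gt0.
have h1 : 0 < A * s * y by rewrite !mulr_gt0.
have h2 : 0 < A * A * s by rewrite !mulr_gt0.
rewrite !expr2; nra.
Qed.

Lemma g_mono y1 y2 : 0 < y2 -> y2 < y1 -> B <= y2 * A * s -> g y2 < g y1.
Proof.
move=> h2 h12 hb; rewrite -subr_gt0.
have hy1 : 0 < y1 by apply: lt_trans h12.
have -> : g y1 - g y2 = (y1 - y2) * (s * A * (2 * y1 * y2 + A * (y1 + y2)) - B * (y1 + y2 + 2 * A))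
   / ((y1 + A) ^+ 2 * (y2 + A) ^+ 2).
  by rewrite /g; field; nz.
apply: divr_gt0; last by apply: mulr_gt0; apply: exprn_gt0; apply: addr_gt0.
apply: mulr_gt0; first by rewrite subr_gt0.
have e1 : B * y1 <= s * A * y2 * y1 by rewrite ler_pM2r //; lra.
have e2 : s * A * y2 < s * A * y1 by rewrite ltr_pM2l ?mulr_gt0.
have e3 : 0 < A by [].
nra.
Qed.
End Alg.

Lemma sum_pos_pred (R : realType) (n : nat) (Pr : pred 'I_n) (F : 'I_n -> R) j :
  (forall k, Pr k -> 0 <= F k) -> Pr j -> 0 < F j -> 0 < \sum_(k | Pr k) F k.
Proof.
move=> h hj hF; rewrite (bigD1 j) //=.
have : 0 <= \sum_(k | Pr k && (k != j)) F k by apply: sumr_ge0 => k /andP [hk _]; apply: h.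
lra.
Qed.

Section Main.
Variables (R : realType) (n : nat) (P : 'M[R]_n) (pi s z : 'I_n -> R) (i : 'I_n).
Hypotheses (hn : (1 < n)%N) (hrs : row_stochastic P) (hirr : irreducible_mx P)
  (hap : aperiodic_mx P) (hpi : stationary_dist P pi) (hs : forall j, 0 < s j)
  (hz : forall j, j != i -> 0 <= z j /\ z j < 1).

Lemma hP : nneg P. Proof. exact: hrs.1. Qed.

Lemma pi_pos b : 0 < pi b.
Proof.
have [h0 [h1 h2]] := hpi.
have [a ha] : exists a, 0 < pi a.
  case: (pselect (exists a, 0 < pi a)) => // H; exfalso.
  have : \sum_a pi a <= \sum_(a : 'I_n) (0 : R).
    apply: ler_sum => a _.
    by rewrite leNgt; apply/negP => ha; apply: H; exists a.
  by rewrite big1_eq h1; lra.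
have [k hk] := reachP hP hirr a b.
rewrite -(stat_pow h2 k b) (bigD1 a) //=.
have : 0 <= \sum_(a' | a' != a) pi a' * (P ^+ k) a' b.
  by apply: sumr_ge0 => a' _; apply: mulr_ge0 => //; apply: (nneg_pow k hP).
have : 0 < pi a * (P ^+ k) a b by apply: mulr_gt0.
lra.
Qed.

Definition zx x := upd z i x.

Lemma zx_i x : zx x i = x. Proof. by rewrite /zx /upd eqxx. Qed.
Lemma zx_ne x j : j != i -> zx x j = z j. Proof. by move=> h; rewrite /zx /upd (negbTE h). Qed.

Lemma zx_bd x j : 0 <= x <= 1 -> 0 <= zx x j <= 1.
Proof.
move=> hx; have [->|hj] := eqVneq j i; first by rewrite zx_i.
by rewrite zx_ne //; have := hz hj; lra.
Qed.

Lemma W_stoch x : 0 <= x <= 1 -> stoch (Wmx P (zx x)).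
Proof.
move=> hx; split.
  move=> a b; rewrite mxE; have := zx_bd a hx => h1.
  have h3 : 0 <= (1 - zx x a) * P a b by apply: mulr_ge0; [lra | apply: hP].
  by case: eqP => _; lra.
move=> a; under eq_bigr do rewrite mxE.
rewrite big_split /= -mulr_sumr hrs.2 mulr1 (bigD1 a) //= eqxx big1 ?addr0.
  by ring.
by move=> b hb; rewrite eq_sym (negbTE hb).
Qed.

Definition nu x j := pi j / (1 - zx x j).

Lemma H_lt1 x : 0 <= x < 1 -> forall a b,
  Hmx P (zx x) a b = nu x b / \sum_j nu x j.
Proof.
move=> hx; have hx' : 0 <= x <= 1 by case/andP: hx => h1 h2; rewrite h1 ltW.
have hW := W_stoch hx'.
have hlt j : 0 < 1 - zx x j.
  have [->|hj] := eqVneq j i; first by rewrite zx_i; case/andP: hx => _ h; lra.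
  by rewrite zx_ne //; have := hz hj; lra.
have [m0 hm0] := primitive i hP hirr hap.
pose eps := \big[Num.min/1]_a (1 - zx x a).
have eps0 : 0 < eps by apply: lt_bigmin => // a _; apply: hlt.
have hdom : forall a b, eps * P a b <= Wmx P (zx x) a b.
  move=> a b; rewrite mxE.
  have he : eps <= 1 - zx x a by apply: bigmin_le.
  have := hP a b; have := zx_bd a hx'.
  by case: eqP => _; nra.
have hpos : forall a, 0 < (Wmx P (zx x) ^+ m0) a i.
  move=> a; apply: lt_le_trans (pow_dom m0 a i hP (ltW eps0) hdom).
  by apply: mulr_gt0 => //; apply: exprn_gt0.
have hnu : forall b, \sum_a nu x a * Wmx P (zx x) a b = nu x b.
  move=> b; under eq_bigr do rewrite mxE mulrDr.
  rewrite big_split /=.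
  under eq_bigr do rewrite /nu mulrA divfK ?lt0r_neq0 ?hlt //.
  rewrite hpi.2.2 (bigD1 b) //= eqxx big1 ?addr0; last first.
    by move=> a ha; rewrite (negbTE ha) mulr0.
  rewrite /nu; have := hlt b => hb; field; exact: lt0r_neq0.
have hS : \sum_j nu x j != 0.
  apply: lt0r_neq0; apply: (@sum_pos_pred _ _ predT _ i) => // [k _|].
    by apply: ltW; apply: divr_gt0; [apply: pi_pos | apply: hlt].
  by apply: divr_gt0; [apply: pi_pos | apply: hlt].
move=> a b; exact: (lim_stat hW hpos hnu hS a b).
Qed.

Lemma H_eq1 a b : Hmx P (zx 1) a b = (b == i)%:R.
Proof.
have hW : stoch (Wmx P (zx 1)) by apply: W_stoch; rewrite ler01 lexx.
have Wi b' : Wmx P (zx 1) i b' = (i == b')%:R.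
  by rewrite mxE zx_i subrr mul0r add0r; case: eqP.
have hAB : forall u v, u != i -> 0 < P u v -> 0 < Wmx P (zx 1) u v.
  move=> u v hu hp; rewrite mxE zx_ne //; have := hz hu => hzu.
  have : 0 < (1 - z u) * P u v by apply: mulr_gt0 => //; lra.
  by case: eqP => _; lra.
have [m hm] : exists m, forall a, 0 < (Wmx P (zx 1) ^+ m) a i.
  apply: pad hW.1 _ _.
    by move=> a'; apply: (reach hW.1 hAB); apply: hirr.
  exists 0%N => t _; apply: lt_le_trans (pow_diag_ge t i hW.1).
  by rewrite Wi eqxx expr1n ltr01.
pose nu1 j := (j == i)%:R : R.
have hnu : forall b', \sum_a' nu1 a' * Wmx P (zx 1) a' b' = nu1 b'.
  move=> b'; rewrite (bigD1 i) //= big1 ?addr0; last first.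
    by move=> a' ha'; rewrite /nu1 (negbTE ha') mul0r.
  by rewrite /nu1 eqxx mul1r Wi eq_sym.
have hS1 : \sum_j nu1 j = 1.
  rewrite (bigD1 i) //= big1 ?addr0 /nu1 ?eqxx //.
  by move=> j hj; rewrite (negbTE hj).
have hS : \sum_j nu1 j != 0 by rewrite hS1 oner_neq0.
by rewrite /Hmx (lim_stat hW hm hnu hS a b) hS1 divr1.
Qed.

Lemma cost_1 : cost P s i (zx 1) = s i.
Proof.
rewrite /cost (bigD1 i) //= H_eq1 eqxx expr1n mul1r big1 ?addr0 //.
by move=> j hj; rewrite H_eq1 (negbTE hj) expr0n /= mul0r.
Qed.

Lemma cost_lt1 x : 0 <= x < 1 -> cost P s i (zx x) =
  g (Acoef pi z i) (Bcoef pi s z i) (s i) (pi i / (1 - x)).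
Proof.
move=> hx.
have eS : \sum_j nu x j = pi i / (1 - x) + Acoef pi z i.
  rewrite (bigD1 i) //= {1}/nu zx_i; congr (_ + _).
  by apply: eq_bigr => j hj; rewrite /nu zx_ne.
have eN : \sum_j nu x j ^+ 2 * s j = (pi i / (1 - x)) ^+ 2 * s i + Bcoef pi s z i.
  rewrite (bigD1 i) //= {1}/nu zx_i; congr (_ + _).
  by apply: eq_bigr => j hj; rewrite /nu zx_ne // expr_div_n mulrAC.
rewrite /cost; under eq_bigr do rewrite H_lt1 // expr_div_n mulrAC.
by rewrite -mulr_suml eN eS.
Qed.

Lemma key :
  let xs := pospart (1 - Acoef pi z i * pi i * s i / Bcoef pi s z i) in
  (0 <= xs < 1) /\
  forall y, 0 <= y <= 1 -> y != xs -> cost P s i (zx xs) < cost P s i (zx y).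
Proof.
have [j hj] : exists j : 'I_n, j != i.
  have h0 : (0 < n)%N by apply: ltn_trans hn.
  pose j0 : 'I_n := Ordinal h0; pose j1 : 'I_n := Ordinal hn.
  case: (eqVneq j0 i) => h; [exists j1 | by exists j0].
  by rewrite -h; apply/eqP => /(congr1 val).
have hlt k : k != i -> 0 < 1 - z k by move=> hk; have := hz hk; lra.
have hA : 0 < Acoef pi z i.
  apply: (@sum_pos_pred _ _ (fun k => k != i) _ j) => // [k hk|].
    by apply: ltW; apply: divr_gt0; [apply: pi_pos | apply: hlt].
  by apply: divr_gt0; [apply: pi_pos | apply: hlt].
have hB : 0 < Bcoef pi s z i.
  apply: (@sum_pos_pred _ _ (fun k => k != i) _ j) => // [k hk|].
    apply: ltW; apply: divr_gt0; last by apply: exprn_gt0; apply: hlt.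
    by apply: mulr_gt0 => //; apply: exprn_gt0; apply: pi_pos.
  apply: divr_gt0; last by apply: exprn_gt0; apply: hlt.
  by apply: mulr_gt0 => //; apply: exprn_gt0; apply: pi_pos.
move: hA hB; set A := Acoef pi z i; set B := Bcoef pi s z i => hA hB.
have hp := pi_pos i; have hsi := hs i.
move: hp hsi; set p := pi i; set si := s i => hp hsi.
have hq : 0 < A * p * si / B by apply: divr_gt0 => //; apply: mulr_gt0 => //; apply: mulr_gt0.
have hApsi : 0 < A * p * si by apply: mulr_gt0 => //; apply: mulr_gt0.
move=> xs.
have [hc|hc] := leP 0 (1 - A * p * si / B).
  have exs : xs = 1 - A * p * si / B by rewrite /xs /pospart max_l.
  have hxs : 0 <= xs < 1 by rewrite exs; apply/andP; split; lra.
  split => // y hy hne.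
  have ey : p / (1 - xs) = B / (A * si).
    rewrite exs; field; repeat (apply/andP; split); apply: lt0r_neq0 => //; lra.
  rewrite cost_lt1 // ey g_at //.
  have [->|hy1] := eqVneq y 1.
    by rewrite cost_1; apply: gmin_lt_s.
  have hy' : 0 <= y < 1 by case/andP: hy => h1 h2; rewrite h1 lt_neqAle hy1 h2.
  rewrite cost_lt1 //; apply: g_gt => //.
    by apply: divr_gt0 => //; case/andP: hy' => _ h; lra.
  apply/eqP => e; move/eqP: hne; apply.
  have h1y : 0 < 1 - y by case/andP: hy' => _ h; lra.
  have : 1 - y = A * p * si / B.
    move: e; rewrite -/A -/B -/p -/si => e.
    rewrite -e; field; repeat (apply/andP; split); apply: lt0r_neq0 => //; lra.
  by rewrite exs; lra.
have exs : xs = 0 by rewrite /xs /pospart max_r //; apply: ltW.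
have hxs : 0 <= xs < 1 by rewrite exs lexx ltr01.
split => // y hy hne.
have hBp : B < p * A * si.
  have : 1 < A * p * si / B by lra.
  by rewrite ltr_pdivlMr // mul1r => h; lra.
rewrite cost_lt1 // exs subr0 divr1.
have [->|hy1] := eqVneq y 1.
  by rewrite cost_1; apply: g_lt_s => //; apply: ltW.
have hy' : 0 <= y < 1 by case/andP: hy => h1 h2; rewrite h1 lt_neqAle hy1 h2.
have h1y : 0 < 1 - y by case/andP: hy' => _ h; lra.
have hy0 : 0 < y by move: hne; rewrite exs => hne; case/andP: hy => h1 _; rewrite lt_neqAle h1 andbT eq_sym.
rewrite cost_lt1 //; apply: g_mono => //; last by apply: ltW.
by rewrite ltr_pdivlMr // -/p; nra.
Qed.

End Main.

Unset Implicit Arguments.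
Local Open Scope ring_scope.
Local Open Scope classical_set_scope.

Theorem proposition3 (R : realType) (n : nat) (P : 'M[R]_n) (pi s : 'I_n -> R)
  (z : 'I_n -> R) (i : 'I_n) :
  (1 < n)%N ->
  row_stochastic P -> irreducible_mx P -> aperiodic_mx P ->
  stationary_dist P pi ->
  (forall j, 0 < s j) ->
  (forall j, j != i -> 0 <= z j /\ z j < 1) ->
  best_response P s i z =
    [set pospart (1 - Acoef pi z i * pi i * s i / Bcoef pi s z i)] /\
  best_response P s i z `<=` [set x | 0 <= x < 1].
Proof.
move=> hn hrs hirr hap hpi hs hz.
have := key hn hrs hirr hap hpi hs hz.
set xs := pospart _ => -[hxs hlt].
have hxs' : 0 <= xs <= 1 by case/andP: hxs => h1 h2; rewrite h1 ltW.
have BR : best_response P s i z = [set xs].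
  apply/seteqP; split => x.
    move=> [hx hmin]; apply/eqP/negPn/negP => hne.
    have h1 := hmin xs hxs'; have h2 := hlt x hx hne.
    rewrite /zx in h2; rewrite /= in h1; lra.
  move=> -> /=; split => // y hy.
  have [->|hne] := eqVneq y xs; first exact: lexx.
  exact: ltW (hlt y hy hne).
split => //; rewrite BR => x -> /=; exact: hxs.
Qed.
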